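(* Let $\Lambda$ be a lattice of rank $s$ with basis $\mathcal V=(v_1,\ldots,v_s)$, and let $\bar a=(a_1,\ldots,a_t)\in(\mathcal F^0(\Lambda,\bar K))^t$. The bijection $\mathrm{Char}(\Lambda,\bar K^\times)\to(\bar K^\times)^s$, $g^\vee\mapsto(g^\vee(v_1),\ldots,g^\vee(v_s))$, restricts to a bijection from the set of $\bar a$-harmonic characters of $\Lambda$ onto $\Sigma_{\bar a,\mathcal V}$. Moreover, for every $\bar n=(n_1,\ldots,n_s)$ with all $n_i$ positive integers coprime to $p$, there are bijections $$\Sigma_{\bar a,\mathcal V}\cap\mu_{\bar n}\ \cong\ \{\bar a_*\text{-harmonic characters of }G_{\bar n,\mathcal V}\}\ \cong\ V(\bar a_* ),$$ and consequently $d(\bar a,\Lambda_{\bar n,\mathcal V})=\mathrm{card}\,V(\bar a_* )=\mathrm{card}\,(\Sigma_{\bar a,\mathcal V}\cap\mu_{\bar n})$.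
   Context: $K=\mathrm{GF}(p^r)$, $\bar K$ an algebraic closure. A lattice is a free abelian group of finite rank. For an abelian group $G$, $\mathcal F(G,\bar K)$ (resp. $\mathcal F^0(G,\bar K)$) is the space of all (resp. finitely supported) functions $G\to\bar K$; $(f*a)(g)=\sum_h f(h)a(g-h)$, $\Delta_af=f*a$. $\mathrm{Char}(\Lambda,\bar K^\times)$ is the set of homomorphisms $\Lambda\to\bar K^\times$; a function or character $f$ is $\bar a$-harmonic if $f*a_j=0$ for all $j$. The symbol of $a\in\mathcal F^0(\Lambda,\bar K)$ is the Laurent polynomial $\sigma_{a,\mathcal V}=\sum_{v=\sum_i\alpha_iv_i\in\Lambda}a(v)x_1^{-\alpha_1}\cdots x_s^{-\alpha_s}$, and $\Sigma_{\bar a,\mathcal V}=\{\xi\in(\bar K^\times)^s:\sigma_{a_j,\mathcal V}(\xi)=0,\ j=1,\ldots,t\}$. $\mu_{\bar n}=\{\xi\in(\bar K^\times)^s:\xi_i^{n_i}=1\ \forall i\}$. $\Lambda_{\bar n,\mathcal V}=\sum_i n_i\mathbb Z v_i$, $G_{\bar n,\mathcal V}=\Lambda/\Lambda_{\bar n,\mathcal V}$, $\pi:\Lambda\to G_{\bar n,\mathcal V}$ the projection, and $(a_j)_*\in\mathcal F(G_{\bar n,\mathcal V},\bar K)$, $(a_j)_*(c)=\sum_{v\in\pi^{-1}(c)}a_j(v)$; $\bar a_*=((a_1)_*,\ldots,(a_t)_* )$. For $G=G_{\bar n,\mathcal V}$, $G^\vee$ is the group of characters $G\to\bar K^\times$,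 $\hat b(g^\vee)=\sum_{g\in G}b(g)g^\vee(g)$, and $V(\bar a_* )=\{g^\vee\in G^\vee:\widehat{(a_j)_*}(g^\vee)=0\ \forall j\}$. For a finite-index sublattice $\Lambda'$, $d(\bar a,\Lambda')=\dim\bigcap_j\ker\big(\Delta_{a_j}|_{\mathcal F_{\Lambda'}(\Lambda,\bar K)}\big)$, where $\mathcal F_{\Lambda'}(\Lambda,\bar K)$ is the space of $\Lambda'$-periodic functions. *)

(* Defs.v *)
From HB Require Import structures.
From mathcomp Require Import all_boot all_order all_algebra.
From mathcomp Require Import finmap.
Set Implicit Arguments. Unset Strict Implicit. Unset Printing Implicit Defensive.
Import Order.TTheory GRing.Theory Num.Theory.
Local Open Scope ring_scope.

(* Ambient field: Kbar, an algebraically closed field of characteristic p,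
   algebraic over its prime subfield (= an algebraic closure of GF(p^r)). *)
Definition algebraic_over_prime_field (F : closedFieldType) : Prop :=
  forall x : F, exists q : {poly F},
    q != 0 /\ (forall i, exists k : nat, q`_i = k%:R) /\ root q x.

Section Lattice.
Variables (F : closedFieldType) (L : zmodType) (s : nat).

Definition fsF := {fsfun L -> F with 0}.

(* (f * a)(g) = sum_h f(h) a(g - h), written as a sum over supp a *)
Definition conv (f : L -> F) (a : fsF) (g : L) : F :=
  \sum_(k <- finsupp a) f (g - k) * a k.

Definition harmonic (t : nat) (a : 'I_t -> fsF) (f : L -> F) : Prop :=
  forall j g, conv f (a j) g = 0.

Definition is_char (chi : L -> F) : Prop :=
  (forall x y, chi (x + y) = chi x * chi y) /\ (forall x, chi x != 0).

(* symbol sigma_{a,V} evaluated at xi; coord w = (alpha_1,...,alpha_s) *)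
Definition symbol_eval (coord : L -> 'I_s -> int) (a : fsF)
    (xi : {ffun 'I_s -> F}) : F :=
  \sum_(w <- finsupp a) a w * \prod_(i < s) xi i ^ (- coord w i).

Definition Sigma (coord : L -> 'I_s -> int) (t : nat) (a : 'I_t -> fsF)
    (xi : {ffun 'I_s -> F}) : Prop :=
  (forall i, xi i != 0) /\ (forall j, symbol_eval coord (a j) xi = 0).

Definition mu (n : 'I_s -> nat) (xi : {ffun 'I_s -> F}) : Prop :=
  forall i, xi i != 0 /\ xi i ^+ n i = 1.

Definition in_Lambda_n (v : 'I_s -> L) (n : 'I_s -> nat) (x : L) : Prop :=
  exists beta : 'I_s -> int, x = \sum_(i < s) v i *~ ((n i)%:Z * beta i).

Definition periodic (P : L -> Prop) (f : L -> F) : Prop :=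
  forall x y, P y -> f (x + y) = f x.
End Lattice.

Section FiniteGroup.
Variables (F : closedFieldType) (L : zmodType) (G : finZmodType).

Definition push (pi : L -> G) (a : fsF F L) (c : G) : F :=
  \sum_(w <- finsupp a | pi w == c) a w.

Definition convG (f b : G -> F) (g : G) : F := \sum_(h : G) f h * b (g - h).

Definition is_charG (chi : G -> F) : Prop :=
  (forall x y, chi (x + y) = chi x * chi y) /\ (forall x, chi x != 0).

Definition harmonicG (t : nat) (b : 'I_t -> G -> F) (f : G -> F) : Prop :=
  forall j g, convG f (b j) g = 0.

Definition fourier (b : G -> F) (chi : G -> F) : F := \sum_(g : G) b g * chi g.

Definition Vset (t : nat) (b : 'I_t -> G -> F) (chi : {ffun G -> F}) : Prop :=
  is_charG chi /\ forall j, fourier (b j) chi = 0.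
End FiniteGroup.

Definition bijection_between (A B : Type) (P : A -> Prop) (Q : B -> Prop) : Prop :=
  exists f : A -> B, (forall x, P x -> Q (f x)) /\
    (forall x y, P x -> P y -> f x = f y -> x = y) /\
    (forall y, Q y -> exists2 x, P x & f x = y).

Definition card_is (A : eqType) (P : A -> Prop) (N : nat) : Prop :=
  exists l : seq A, uniq l /\ size l = N /\ forall x, x \in l <-> P x.

Definition dim_is (T : Type) (F : fieldType) (P : (T -> F) -> Prop) (N : nat) : Prop :=
  (forall f g (c : F), P f -> P g -> P (fun x => c * f x + g x)) /\ P (fun _ => 0) /\
  exists b : 'I_N -> T -> F, (forall k, P (b k)) /\
    (forall c : 'I_N -> F, (forall x, \sum_(k < N) c k * b k x = 0) -> forall k, c k = 0) /\
    (forall f, P f -> exists c : 'I_N -> F, forall x, f x = \sum_(k < N) c k * b k x).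

(* Main.v *)
Require Import Defs.
From HB Require Import structures.
From mathcomp Require Import all_boot all_order all_algebra.
From mathcomp Require Import finmap.
From mathcomp Require Import ring.
From mathcomp Require Import cyclic separable cyclotomic.
Set Implicit Arguments. Unset Strict Implicit. Unset Printing Implicit Defensive.
Import Order.TTheory GRing.Theory Num.Theory.
Local Open Scope ring_scope.

Section Coord.
Variables (F : closedFieldType) (L : zmodType) (s : nat) (v : 'I_s -> L)
  (coord : L -> 'I_s -> int).
Hypothesis hspan : forall x : L, x = \sum_(i < s) v i *~ coord x i.
Hypothesis hindep : forall alpha : 'I_s -> int,
      \sum_(i < s) v i *~ alpha i = 0 -> forall i, alpha i = 0.

Lemma coord_sum (alpha : 'I_s -> int) i :
  coord (\sum_(j < s) v j *~ alpha j) i = alpha i.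
Proof.
set x := \sum_(j < s) _.
have H : \sum_(j < s) v j *~ (coord x j - alpha j) = 0.
  under eq_bigr do rewrite mulrzBr.
  by rewrite sumrB -hspan subrr.
by apply/eqP; rewrite -subr_eq0; apply/eqP; exact: (hindep H i).
Qed.

Lemma coordD x y i : coord (x + y) i = coord x i + coord y i.
Proof.
rewrite {1}(hspan x) {1}(hspan y) -big_split /=.
under eq_bigr do rewrite -mulrzDr.
by rewrite coord_sum.
Qed.

Lemma coordN x i : coord (- x) i = - coord x i.
Proof.
rewrite {1}(hspan x) -sumrN.
under eq_bigr do rewrite -mulrNz.
by rewrite coord_sum.
Qed.

Lemma coord_v j i : coord (v j) i = (i == j)%:R.
Proof.
have -> : v j = \sum_(k < s) v k *~ (k == j)%:R.
  rewrite (bigD1 j) //= eqxx mulr1z big1 ?addr0 // => k /negPf ->.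
  by rewrite mulr0z.
by rewrite coord_sum.
Qed.

Definition ch (xi : {ffun 'I_s -> F}) (x : L) : F := \prod_(i < s) xi i ^ coord x i.

Definition nz (xi : {ffun 'I_s -> F}) := forall i, xi i != 0.

Lemma chD xi x y : nz xi -> ch xi (x + y) = ch xi x * ch xi y.
Proof.
move=> h; rewrite /ch -big_split /=; apply: eq_bigr => i _.
by rewrite coordD expfzDr.
Qed.

Lemma ch_neq0 xi x : nz xi -> ch xi x != 0.
Proof.
move=> h; rewrite /ch prodf_seq_neq0; apply/allP => i _ /=.
exact: expfz_neq0.
Qed.

Lemma ch_v xi j : ch xi (v j) = xi j.
Proof.
rewrite /ch (bigD1 j) //= coord_v eqxx expr1z big1 ?mulr1 // => i /negPf.
by rewrite coord_v => ->.
Qed.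

Lemma ch0 xi : ch xi 0 = 1.
Proof.
rewrite /ch big1 // => i _.
have := coord_sum (fun=> 0) i; rewrite big1 => [->|j _] //.
Qed.

Lemma chN xi x : ch xi (- x) = \prod_(i < s) xi i ^ (- coord x i).
Proof. by rewrite /ch; apply: eq_bigr => i _; rewrite coordN. Qed.

Lemma ch_sum xi (alpha : 'I_s -> int) :
  ch xi (\sum_(j < s) v j *~ alpha j) = \prod_(i < s) xi i ^ alpha i.
Proof. by rewrite /ch; apply: eq_bigr => i _; rewrite coord_sum. Qed.

Lemma ch_is_char xi : nz xi -> is_char (ch xi).
Proof. by move=> h; split => [x y|x]; [apply: chD | apply: ch_neq0]. Qed.

Section Char.
Variable chi : L -> F.
Hypothesis hc : is_char chi.

Lemma chi0 : chi 0 = 1.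
Proof.
have := hc.1 0 0; rewrite addr0 => /eqP.
rewrite -{1}(mulr1 (chi 0)) eq_sym => /eqP /mulfI -> //; exact: hc.2.
Qed.

Lemma chiN x : chi (- x) = (chi x)^-1.
Proof.
have := hc.1 x (- x); rewrite subrr chi0 => /esym H.
by rewrite -[LHS]mul1r -(mulVf (hc.2 x)) -mulrA H mulr1.
Qed.

Lemma chi_mulz x z : chi (x *~ z) = chi x ^ z.
Proof.
have Hn : forall n : nat, chi (x *+ n) = chi x ^+ n.
  elim=> [|n IH]; first by rewrite mulr0n chi0.
  by rewrite mulrS hc.1 IH exprS.
case: z => n; first exact: Hn.
rewrite NegzE mulrNz chiN -invr_expz; congr (_^-1); exact: (Hn n.+1).
Qed.

Lemma chi_sum (I : Type) (r : seq I) (f : I -> L) :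
  chi (\sum_(k <- r) f k) = \prod_(k <- r) chi (f k).
Proof.
elim: r => [|k r IH]; first by rewrite !big_nil chi0.
by rewrite !big_cons hc.1 IH.
Qed.

Lemma chi_ch x : chi x = ch [ffun i => chi (v i)] x.
Proof.
rewrite {1}(hspan x) chi_sum /ch; apply: eq_bigr => i _.
by rewrite chi_mulz ffunE.
Qed.

End Char.

Lemma nz_chi chi : is_char chi -> nz [ffun i => chi (v i)].
Proof. by move=> hc i; rewrite ffunE; apply: hc.2. Qed.

Lemma conv_ch xi (b : fsF F L) g : nz xi ->
  conv (ch xi) b g = ch xi g * symbol_eval coord b xi.
Proof.
move=> h; rewrite /conv /symbol_eval big_distrr /=; apply: eq_bigr => k _.
rewrite chD // chN -mulrA; congr (_ * _); exact: mulrC.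
Qed.


Lemma dedekind (l : seq {ffun 'I_s -> F}) (c : {ffun 'I_s -> F} -> F) :
  uniq l -> (forall xi, xi \in l -> nz xi) ->
  (forall x, \sum_(xi <- l) c xi * ch xi x = 0) ->
  forall xi, xi \in l -> c xi = 0.
Proof.
elim: l c => [|eta l IH] c //= /andP[etal ul] hnz hsum.
have hl : forall xi, xi \in l -> c xi = 0.
  move=> xi xil.
  have H y : forall xi, xi \in l -> c xi * (ch xi y - ch eta y) = 0.
    apply: (IH (fun xi => c xi * (ch xi y - ch eta y))) => //.
      by move=> z zl; apply: hnz; rewrite inE zl orbT.
    move=> x.
    have e1 := hsum (x + y); have e2 := hsum x.
    rewrite big_cons in e1; rewrite big_cons in e2.
    have hnzeta : nz eta by apply: hnz; rewrite inE eqxx.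
    have E : \sum_(z <- l) c z * (ch z y - ch eta y) * ch z x =
       \sum_(z <- l) c z * ch z (x + y) - ch eta y * \sum_(z <- l) c z * ch z x.
      rewrite big_distrr -sumrB; apply: eq_big_seq => z zl.
      rewrite chD //; last by apply: hnz; rewrite inE zl orbT.
      rewrite /=; ring.
    rewrite E.
    have -> : \sum_(z <- l) c z * ch z (x + y) = - (c eta * ch eta (x + y)).
      by apply/eqP; rewrite -addr_eq0 addrC e1.
    have -> : \sum_(z <- l) c z * ch z x = - (c eta * ch eta x).
      by apply/eqP; rewrite -addr_eq0 addrC e2.
    rewrite chD //; ring.
  have xeta : xi != eta by apply: contraNneq etal => <-.
  have [i hi] : exists i, xi i != eta i.
    apply/existsP; apply: contraNT xeta => /existsPn h.
    by apply/eqP/ffunP => i; apply/eqP; rewrite -[_ == _]negbK h.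
  have := H (v i) xi xil; rewrite !ch_v => /eqP; rewrite mulf_eq0 subr_eq0.
  by rewrite (negPf hi) orbF => /eqP.
move=> xi; rewrite inE => /orP[/eqP ->|]; last exact: hl.
have := hsum 0; rewrite big_cons big1_seq ?addr0 ?ch0 ?mulr1 // => z /andP[_ zl].
by rewrite hl // mul0r.
Qed.

Lemma conv_ext (f f' : L -> F) (b : fsF F L) g :
  (forall y, f y = f' y) -> conv f b g = conv f' b g.
Proof. by move=> E; rewrite /conv; apply: eq_bigr => k _; rewrite E. Qed.

Lemma harm_sigma chi t (a : 'I_t -> fsF F L) : is_char chi ->
  (harmonic a chi <-> Sigma coord a [ffun i => chi (v i)]).
Proof.
move=> hc.
have E j g : conv chi (a j) g = chi g * symbol_eval coord (a j) [ffun i => chi (v i)].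
  rewrite (conv_ext _ _ (chi_ch hc)) conv_ch //; last exact: nz_chi.
  by rewrite -chi_ch.
split.
  move=> h; split; first exact: nz_chi.
  move=> j; have := h j 0; rewrite E => /eqP; rewrite mulf_eq0 (negPf (hc.2 0)) /=.
  by move/eqP.
by move=> [_ h] j g; rewrite E h mulr0.
Qed.

End Coord.

Lemma card_bij (A B : eqType) (P : A -> Prop) (Q : B -> Prop) N :
  card_is P N -> bijection_between P Q -> card_is Q N.
Proof.
move=> [l [ul [sl hl]]] [f [fPQ [finj fsurj]]].
exists (map f l); split; last split.
- rewrite map_inj_in_uniq // => x y /hl Px /hl Py; exact: finj.
- by rewrite size_map.
- move=> y; split.
    by move=> /mapP [x /hl Px ->]; apply: fPQ.
  by move=> /fsurj [x Px <-]; apply: map_f; apply/hl.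
Qed.

Section Group.
Variables (F : closedFieldType) (L : zmodType) (s : nat) (v : 'I_s -> L)
  (coord : L -> 'I_s -> int).
Hypothesis hspan : forall x : L, x = \sum_(i < s) v i *~ coord x i.
Hypothesis hindep : forall alpha : 'I_s -> int,
      \sum_(i < s) v i *~ alpha i = 0 -> forall i, alpha i = 0.
Variables (n : 'I_s -> nat) (G : finZmodType) (pi : L -> G).
Hypothesis hadd : forall x y, pi (x + y) = pi x + pi y.
Hypothesis hsurj : forall c : G, exists x, pi x = c.
Hypothesis hker : forall x, pi x = 0 <-> in_Lambda_n v n x.

Lemma pi0 : pi 0 = 0.
Proof. by apply: (@addrI _ (pi 0)); rewrite -hadd !addr0. Qed.

Lemma piN x : pi (- x) = - pi x.
Proof. by apply: (@addrI _ (pi x)); rewrite -hadd !subrr pi0. Qed.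

Lemma piB x y : pi (x - y) = pi x - pi y.
Proof. by rewrite hadd piN. Qed.

Lemma ch_ker (xi : {ffun 'I_s -> F}) x : mu n xi -> in_Lambda_n v n x -> ch coord xi x = 1.
Proof.
move=> hmu [beta ->]; rewrite (ch_sum hspan hindep) big1 // => i _.
rewrite -exprz_exp.
have -> : xi i ^ (n i)%:Z = 1 by exact: (hmu i).2.
exact: exp1rz.
Qed.

Lemma ch_pi (xi : {ffun 'I_s -> F}) x y : mu n xi -> pi x = pi y ->
  ch coord xi x = ch coord xi y.
Proof.
move=> hmu e.
have nzx : nz xi by move=> i; exact: (hmu i).1.
have -> : x = (x - y) + y by rewrite subrK.
rewrite (chD hspan hindep) // ch_ker ?mul1r //; apply/hker.
by rewrite piB e subrr.
Qed.

Lemma ex_pre (g : G) : exists x, pi x == g.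
Proof. by have [x hx] := hsurj g; exists x; apply/eqP. Qed.

Definition pre (g : G) : L := xchoose (ex_pre g).

Lemma pre_spec g : pi (pre g) = g.
Proof. exact/eqP/(xchooseP (ex_pre g)). Qed.

Definition Phi1 (xi : {ffun 'I_s -> F}) : {ffun G -> F} := [ffun g => ch coord xi (pre g)].

Lemma Phi1_pi xi x : mu n xi -> Phi1 xi (pi x) = ch coord xi x.
Proof. by move=> hmu; rewrite ffunE; apply: ch_pi => //; rewrite pre_spec. Qed.

Lemma convG_push (f : G -> F) (b : fsF F L) x :
  convG f (push pi b) (pi x) = conv (fun y => f (pi y)) b x.
Proof.
rewrite /convG /push /conv.
under eq_bigr do rewrite big_distrr /= big_mkcond /=.
rewrite exchange_big /=; apply: eq_bigr => k _.
rewrite (bigD1 (pi x - pi k)) //= subKr eqxx big1 ?addr0; last first.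
  move=> h /negPf hne; case: eqP => // e.
  by move: hne; rewrite e subKr eqxx.
by rewrite piB.
Qed.

Lemma harmG_iff t (a : 'I_t -> fsF F L) (chiG : G -> F) :
  harmonicG (fun j => push pi (a j)) chiG <-> harmonic a (fun y => chiG (pi y)).
Proof.
split => h j g.
  by rewrite -convG_push h.
by have [x <-] := hsurj g; rewrite convG_push h.
Qed.

Lemma charG_char (chiG : G -> F) : is_charG chiG -> is_char (fun y => chiG (pi y)).
Proof. by move=> [h1 h2]; split => [x y|x]; rewrite ?hadd. Qed.

Lemma in_Lambda_v i : in_Lambda_n v n (v i *~ (n i)%:Z).
Proof.
exists (fun j => (j == i)%:R).
rewrite (bigD1 i) //= eqxx mulr1 big1 ?addr0 // => j /negPf ->.
by rewrite mulr0 mulr0z.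
Qed.

Lemma bij1 t (a : 'I_t -> fsF F L) :
  bijection_between (fun xi : {ffun 'I_s -> F} => Sigma coord a xi /\ mu n xi)
    (fun chi : {ffun G -> F} => is_charG chi /\ harmonicG (fun j => push pi (a j)) chi).
Proof.
exists Phi1; split; last split.
- move=> xi [[hnz hsig] hmu]; split.
    split => [g h|g]; rewrite !ffunE.
      rewrite -(chD hspan hindep) //; apply: ch_pi => //.
      by rewrite hadd !pre_spec.
    exact: ch_neq0.
  apply/harmG_iff => j g.
  rewrite (conv_ext _ _ (fun y => Phi1_pi y hmu)) (conv_ch hspan hindep) //.
  by rewrite hsig mulr0.
- move=> xi1 xi2 [[nz1 _] hmu1] [[nz2 _] hmu2] e; apply/ffunP => i.
  by rewrite -(ch_v hspan hindep xi1) -(ch_v hspan hindep xi2) -!Phi1_pi // e.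
- move=> chiG [hc hh].
  pose chi := fun y => chiG (pi y).
  have hchi : is_char chi by exact: charG_char.
  have hh' : harmonic a chi by apply/harmG_iff.
  exists [ffun i => chi (v i)].
    split; first exact/(harm_sigma hspan hindep).
    move=> i; split; first by rewrite ffunE; exact: hchi.2.
    rewrite ffunE; change (chi (v i) ^ (n i)%:Z = 1).
    rewrite -(chi_mulz hchi (v i) (n i)%:Z) /chi.
    have /hker -> := in_Lambda_v i.
    by rewrite -pi0; exact: (chi0 (charG_char hc)).
  apply/ffunP => g; rewrite ffunE -(chi_ch hspan hchi) /chi pre_spec //.
Qed.

End Group.

Section Group2.
Variables (F : closedFieldType) (G : finZmodType).

Definition Phi2 (chi : {ffun G -> F}) : {ffun G -> F} := [ffun g => chi (- g)].

Lemma convG_char (chi : G -> F) (b : G -> F) g : is_charG chi ->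
  convG chi b g = chi g * fourier b [ffun h => chi (- h)].
Proof.
move=> hc; rewrite /convG /fourier (reindex_inj (subrI g)) /= big_distrr /=.
apply: eq_bigr => h _; rewrite subKr ffunE hc.1; ring.
Qed.

Lemma charG0 (chi : G -> F) : is_charG chi -> chi 0 = 1.
Proof.
move=> hc; have := hc.1 0 0; rewrite addr0 => /eqP.
rewrite -{1}(mulr1 (chi 0)) eq_sym => /eqP /mulfI -> //; exact: hc.2.
Qed.

Lemma bij2 t (b : 'I_t -> G -> F) :
  bijection_between (fun chi : {ffun G -> F} => is_charG chi /\ harmonicG b chi)
    (Vset b).
Proof.
exists Phi2; split; last split.
- move=> chi [hc hh]; split.
    by split => [x y|x]; rewrite !ffunE ?opprD ?hc.1 //; apply: hc.2.
  move=> j; have := hh j 0; rewrite convG_char // charG0 // mul1r.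
  suff -> : Phi2 chi = [ffun h => chi (- h)] by [].
  by apply/ffunP => h; rewrite !ffunE.
- move=> c1 c2 _ _ e; apply/ffunP => g.
  by have := congr1 (fun f : {ffun G -> F} => f (- g)) e; rewrite /= !ffunE opprK.
- move=> psi [hc hf].
  have hc' : is_charG [ffun g => psi (- g)].
    by split => [x y|x]; rewrite !ffunE ?opprD ?hc.1 //; apply: hc.2.
  have E : [ffun h => [ffun g => psi (- g)] (- h)] = psi.
    by apply/ffunP => h; rewrite !ffunE opprK.
  exists [ffun g => psi (- g)].
    by split => // j g; rewrite convG_char // E hf mulr0.
  by rewrite /Phi2 E.
Qed.

End Group2.

Lemma prim_exists (F : closedFieldType) m : (0 < m)%N -> m%:R != 0 :> F ->
  {z : F | m.-primitive_root z}.
Proof.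
move=> m_gt0 mnz.
pose p : {poly F} := 'X^m - 1; have [r Dp] := closed_field_poly_normal p.
apply/sigW; rewrite (monicP _) ?monicXnsubC // scale1r in Dp.
have rn1: all m.-unity_root r by apply/allP=> z; rewrite -root_prod_XsubC -Dp.
have sz_r: (m < (size r).+1)%N.
  by rewrite -(size_prod_XsubC r id) -Dp size_XnsubC.
have [|z] := hasP (has_prim_root m_gt0 rn1 _ sz_r); last by exists z.
by rewrite -separable_prod_XsubC -Dp separable_Xn_sub_1.
Qed.

Lemma sum_roots (F : fieldType) m (w : F) (c : int) : (0 < m)%N ->
  m.-primitive_root w ->
  \sum_(j < m) (w ^+ j) ^ c = if (m%:Z %| c)%Z then m%:R else 0.
Proof.
move=> m_gt0 hw.
have E j : (w ^+ j) ^ c = (w ^ c) ^+ j.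
  by change ((w ^ (j:int)) ^ c = (w ^ c) ^ (j:int)); rewrite exprzAC.
under eq_bigr do rewrite E.
set z := w ^ c.
have zm : z ^+ m = 1.
  change (z ^ (m:int) = 1); rewrite /z exprzAC.
  have -> : w ^ (m:int) = 1 by exact: prim_expr_order.
  exact: exp1rz.
case: ifP => hd.
  have z1 : z = 1.
    rewrite /z -(divzK hd) mulrC -exprz_exp.
    have -> : w ^ (m:int) = 1 by exact: prim_expr_order.
    exact: exp1rz.
  by rewrite z1 (eq_bigr (fun _ => 1)) ?sumr_const ?card_ord // => j _; rewrite expr1n.
have z1 : z != 1.
  apply: contraFN hd => /eqP z1.
  have hm0 : (m:int) != 0 by rewrite eqz_nat -lt0n.
  have hr := modz_ge0 c hm0.
  move: z1; rewrite /z {1}(divz_eq c m) expfzDr; last by rewrite (prim_root_eq0 hw) -lt0n.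
  rewrite [X in w ^ X * _]mulrC -exprz_exp.
  have -> : w ^ (m:int) = 1 by exact: prim_expr_order.
  rewrite exp1rz mul1r.
  have [r' hr'] : exists r' : nat, (c %% m)%Z = r' by exists `|(c %% m)%Z|%N; rewrite gez0_abs.
  rewrite hr'; change (w ^+ r' = 1 -> (m%:Z %| c)%Z) => /eqP.
  rewrite -(prim_order_dvd hw) => dv.
  have hlt := ltz_pmod c (m_gt0 : (0 < m%:Z)).
  rewrite hr' ltz_nat in hlt.
  have r0 : r' = 0%N.
    case: (posnP r') => // rpos; have := dvdn_leq rpos dv; by rewrite leqNgt hlt.
  by apply/dvdz_mod0P; rewrite hr' r0.
have := subrX1 z m; rewrite zm subrr => /esym /eqP.
by rewrite mulf_eq0 subr_eq0 (negPf z1) /= => /eqP.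
Qed.

Section Dim.
Variables (F : closedFieldType) (L : zmodType) (s : nat) (v : 'I_s -> L)
  (coord : L -> 'I_s -> int).
Hypothesis hspan : forall x : L, x = \sum_(i < s) v i *~ coord x i.
Hypothesis hindep : forall alpha : 'I_s -> int,
      \sum_(i < s) v i *~ alpha i = 0 -> forall i, alpha i = 0.
Variables (n : 'I_s -> nat) (w : 'I_s -> F).
Hypothesis hn : forall i, (0 < n i)%N.
Hypothesis hw : forall i, (n i).-primitive_root (w i).
Variables (t : nat) (a : 'I_t -> fsF F L).

Definition K := (\sum_(i < s) n i).+1.
Definition Q (i : 'I_s) (j : 'I_K) : bool := (j < n i)%N.
Definition xiof (b : {ffun 'I_s -> 'I_K}) : {ffun 'I_s -> F} := [ffun i => w i ^+ b i].
Definition M := [seq xiof b | b <- enum (family Q)].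
Definition sigb (xi : {ffun 'I_s -> F}) : bool :=
  [forall j : 'I_t, symbol_eval coord (a j) xi == 0].
Definition lS := [seq xi <- M | sigb xi].
Definition wof (b : {ffun 'I_s -> 'I_K}) : L := \sum_(i < s) v i *~ (b i : nat)%:Z.
Definition delta (y : L) : F := if [forall i, ((n i)%:Z %| coord y i)%Z] then 1 else 0.

Lemma n_leK i : (n i < K)%N.
Proof. by rewrite ltnS (bigD1 i) //= leq_addr. Qed.

Lemma w_neq0 i : w i != 0.
Proof. by rewrite (prim_root_eq0 (hw i)) -lt0n hn. Qed.

Lemma nz_xiof b : nz (xiof b).
Proof. by move=> i; rewrite ffunE expf_neq0 // w_neq0. Qed.

Lemma xiof_inj b1 b2 : b1 \in family Q -> b2 \in family Q -> xiof b1 = xiof b2 -> b1 = b2.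
Proof.
move=> /familyP h1 /familyP h2 e; apply/ffunP => i; apply: val_inj => /=.
have := congr1 (fun f : {ffun 'I_s -> F} => f i) e; rewrite /= !ffunE => /eqP.
rewrite (eq_prim_root_expr (hw i)) !modn_small //.
  by move/eqP.
exact: h2.
exact: h1.
Qed.

Lemma mem_M xi : xi \in M <-> mu n xi.
Proof.
split.
  move=> /mapP [b _ ->] i; split; first exact: nz_xiof.
  by rewrite /xiof ffunE exprAC (prim_expr_order (hw i)) expr1n.
move=> hmu.
pose k i := sval (prim_rootP (hw i) (hmu i).2).
have hk i : xi i = w i ^+ k i by rewrite /k; case: prim_rootP.
have kK i : (inord (k i) : 'I_K) = k i :> nat.
  by rewrite inordK // (leq_trans (ltn_ord (k i))) // ltnW // n_leK.
pose b := [ffun i => (inord (k i) : 'I_K)].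
have bQ : b \in family Q by apply/familyP => i; rewrite unfold_in /Q ffunE kK.
have -> : xi = xiof b by apply/ffunP => i; rewrite !ffunE kK hk.
by apply: map_f; rewrite mem_enum.
Qed.

Lemma uniq_M : uniq M.
Proof.
rewrite map_inj_in_uniq ?enum_uniq // => b1 b2; rewrite !mem_enum; exact: xiof_inj.
Qed.

Lemma nz_M xi : xi \in M -> nz xi.
Proof. by move/mem_M => h i; exact: (h i).1. Qed.

Hypothesis hnF : forall i, (n i)%:R != 0 :> F.

Lemma prod_if (P : 'I_s -> bool) :
  \prod_(i < s) (if P i then 1 else 0 : F) = if [forall i, P i] then 1 else 0.
Proof.
case: forallP => [h|/forallP/forallPn [i /negPf hi]].
  by rewrite big1 // => i _; rewrite h.
by rewrite (bigD1 i) //= hi mul0r.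
Qed.

Definition cN : F := \prod_(i < s) (n i)%:R^-1.

Lemma delta_sum y : delta y = cN * \sum_(b in family Q) ch coord (xiof b) y.
Proof.
rewrite /delta -prod_if.
have E i : (if ((n i)%:Z %| coord y i)%Z then 1 else 0 : F) =
    (n i)%:R^-1 * \sum_(j < K | Q i j) (w i ^+ j) ^ coord y i.
  rewrite /Q -(big_ord_widen K (fun j => (w i ^+ j) ^ coord y i) (ltnW (n_leK i))).
  rewrite sum_roots // ; case: ifP => _; last by rewrite mulr0.
  by rewrite mulVf.
rewrite (eq_bigr _ (fun i _ => E i)) big_split /=; congr (_ * _).
rewrite (bigA_distr_big_dep Q); apply: eq_bigr => b _.
by rewrite /ch; apply: eq_bigr => i _; rewrite ffunE.
Qed.

Lemma lam_of_dvd y : (forall i, ((n i)%:Z %| coord y i)%Z) -> in_Lambda_n v n y.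
Proof.
move=> h; exists (fun i => (coord y i %/ (n i)%:Z)%Z).
rewrite {1}(hspan y); apply: eq_bigr => i _.
by rewrite [(n i)%:Z * _]mulrC divzK.
Qed.

Lemma coord_wof_sub x b i : coord (x - wof b) i = coord x i - (b i : nat)%:Z.
Proof. by rewrite (coordD hspan hindep) (coordN hspan hindep) (coord_sum hspan hindep). Qed.

Lemma dvd_iff (c : int) (k m : nat) : (0 < m)%N -> (k < m)%N ->
  (m%:Z %| c - k%:Z)%Z = (k%:Z == (c %% m%:Z)%Z).
Proof.
move=> m0 km; apply/idP/eqP.
  move=> h; have e : c = ((c - k%:Z) %/ m%:Z)%Z * m%:Z + k%:Z by rewrite divzK // subrK.
  by rewrite e modzMDl modz_small // ltz_nat km andbT.
move=> ->; rewrite {1}(divz_eq c m%:Z) addrK.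
by apply: dvdz_mull; apply: dvdzz.
Qed.

Lemma decomp (f : L -> F) x : periodic (in_Lambda_n v n) f ->
  f x = \sum_(b in family Q) f (wof b) * delta (x - wof b).
Proof.
move=> hper.
have m0 i : (n i)%:Z != 0 by rewrite eqz_nat -lt0n hn.
pose b0 := [ffun i => (inord `|(coord x i %% (n i)%:Z)%Z|%N : 'I_K)].
have lt i : (`|(coord x i %% (n i)%:Z)%Z| < n i)%N.
  by rewrite -ltz_nat ssrint.gez0_abs ?modz_ge0 // ltz_pmod // ltz_nat hn.
have b0v i : ((b0 i : nat)%:Z = (coord x i %% (n i)%:Z)%Z).
  rewrite ffunE inordK; first by rewrite ssrint.gez0_abs ?modz_ge0.
  by rewrite (leq_trans (lt i)) // ltnW // n_leK.
have b0Q : b0 \in family Q.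
  by apply/familyP => i; rewrite unfold_in /Q -ltz_nat b0v ltz_pmod // ltz_nat hn.
have Hd b : b \in family Q -> delta (x - wof b) = (b == b0)%:R.
  move=> /familyP hb; rewrite /delta.
  case: (b =P b0) => [->|ne].
    rewrite (_ : [forall i, _] = true) //; apply/forallP => i.
    by rewrite coord_wof_sub dvd_iff ?b0v // -ltz_nat b0v ltz_pmod // ltz_nat hn.
  case: forallP => // h; case: ne; apply/ffunP => i; apply: val_inj; apply/eqP.
  have := h i; rewrite coord_wof_sub dvd_iff //; last exact: (hb i).
  by rewrite -b0v eqz_nat.
rewrite (bigD1 b0) //= Hd // eqxx mulr1 big1 ?addr0; last first.
  by move=> b /andP [bQ ne]; rewrite Hd // (negPf ne) mulr0.
have : in_Lambda_n v n (x - wof b0).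
  apply: lam_of_dvd => i; rewrite coord_wof_sub dvd_iff ?b0v //.
  by rewrite -ltz_nat b0v ltz_pmod // ltz_nat hn.
by move/(hper (wof b0)); rewrite subrKC.
Qed.

Lemma span_M (f : L -> F) : periodic (in_Lambda_n v n) f ->
  exists e : {ffun 'I_s -> F} -> F, forall x, f x = \sum_(xi <- M) e xi * ch coord xi x.
Proof.
move=> hper.
pose d b := \sum_(b' in family Q) f (wof b') * cN * ch coord (xiof b) (- wof b').
have hd x : f x = \sum_(b in family Q) d b * ch coord (xiof b) x.
  rewrite (decomp x hper).
  transitivity (\sum_(b' in family Q) \sum_(b in family Q)
      f (wof b') * cN * ch coord (xiof b) (- wof b') * ch coord (xiof b) x).
    apply: eq_bigr => b' _; rewrite delta_sum mulrA big_distrr /=.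
    apply: eq_bigr => b _; rewrite (chD hspan hindep _ _ (nz_xiof b)); ring.
  rewrite exchange_big; apply: eq_bigr => b _; rewrite /d big_distrl //.
exists (fun xi => \sum_(b in family Q | xiof b == xi) d b) => x.
rewrite hd /M big_map big_enum /=; apply: eq_bigr => b hb; congr (_ * _).
rewrite (big_pred1 b) // => b' /=; apply/andP/eqP => [[h1 /eqP h2]|->].
  exact: xiof_inj.
by rewrite hb eqxx.
Qed.

Definition x0 : {ffun 'I_s -> F} := [ffun=> 1].

Lemma seq_ord (G : {ffun 'I_s -> F} -> F) :
  \sum_(xi <- lS) G xi = \sum_(k < size lS) G (nth x0 lS k).
Proof. by rewrite (big_nth x0) big_mkord. Qed.

Lemma uniq_lS : uniq lS.
Proof. exact: filter_uniq uniq_M. Qed.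

Lemma lS_M xi : xi \in lS -> xi \in M /\ sigb xi.
Proof. by rewrite mem_filter => /andP [h1 h2]. Qed.

Lemma conv_lin (e : {ffun 'I_s -> F} -> F) (l : seq {ffun 'I_s -> F}) (b : fsF F L) x :
  conv (fun y => \sum_(xi <- l) e xi * ch coord xi y) b x =
  \sum_(xi <- l) e xi * conv (ch coord xi) b x.
Proof.
rewrite /conv; under eq_bigr do rewrite big_distrl.
rewrite exchange_big /=; apply: eq_bigr => xi _; rewrite big_distrr /=.
by apply: eq_bigr => k _; rewrite mulrA.
Qed.

Lemma dim_main : dim_is (fun f : L -> F => periodic (in_Lambda_n v n) f /\ harmonic a f) (size lS).
Proof.
split.
  move=> f g c [pf hf] [pg hg]; split.
    by move=> x y hy; rewrite pf // pg.
  move=> j x; have := hf j x; have := hg j x; rewrite /conv => e1 e2.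
  under eq_bigr do rewrite mulrDl -mulrA.
  by rewrite big_split /= -big_distrr /= e2 e1 mulr0 addr0.
split.
  split; first by [].
  by move=> j x; rewrite /conv big1 // => k _; rewrite mul0r.
exists (fun k : 'I_(size lS) => ch coord (nth x0 lS k)); split; last split.
- move=> k; have /lS_M [hM hsig] : nth x0 lS k \in lS by apply: mem_nth.
  have hmu := (mem_M _).1 hM.
  split.
    move=> x y hy; rewrite (chD hspan hindep _ _ (nz_M hM)).
    by rewrite (ch_ker hspan hindep hmu hy) mulr1.
  move=> j g; rewrite (conv_ch hspan hindep _ _ (nz_M hM)).
  by move: hsig => /forallP /(_ j) /eqP ->; rewrite mulr0.
- move=> c h.
  pose e xi := \sum_(k < size lS | nth x0 lS k == xi) c k.
  have ek (k : 'I_(size lS)) : e (nth x0 lS k) = c k.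
    rewrite /e (big_pred1 k) // => k' /=.
    by rewrite nth_uniq // uniq_lS.
  have := @dedekind _ _ _ _ _ hspan hindep lS e uniq_lS.
  move=> /(_ (fun xi hxi => nz_M (lS_M hxi).1)) H k.
  rewrite -ek; apply: H; last by apply: mem_nth.
  by move=> x; rewrite seq_ord -[RHS](h x); apply: eq_bigr => k' _; rewrite ek.
- move=> f [pf hf].
  have [e he] := span_M pf.
  have e0 xi : xi \in M -> ~~ sigb xi -> e xi = 0.
    move=> hM /forallPn [j /eqP hj].
    have hz : forall x, \sum_(z <- M) (e z * symbol_eval coord (a j) z) * ch coord z x = 0.
      move=> x; rewrite -[RHS](hf j x) (conv_ext _ _ he) conv_lin.
      apply: eq_big_seq => z hz; rewrite (conv_ch hspan hindep _ _ (nz_M hz)); ring.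
    have := @dedekind _ _ _ _ _ hspan hindep M
      (fun xi => e xi * symbol_eval coord (a j) xi) uniq_M nz_M hz xi hM.
    move=> /eqP; rewrite mulf_eq0 => /orP [/eqP //|/eqP hs].
    by case: hj.
  exists (fun k => e (nth x0 lS k)) => x.
  transitivity (\sum_(xi <- lS) e xi * ch coord xi x); last by rewrite seq_ord.
  rewrite he /lS big_filter [RHS]big_mkcond /=; apply: eq_big_seq => xi hxi.
  by case: ifP => // /negbT hs; rewrite e0 // mul0r.
Qed.

End Dim.


Unset Implicit Arguments.
Set Strict Implicit.

Theorem proposition3p1
  (p r : nat) (hp : prime p) (hr : (0 < r)%N)
  (F : closedFieldType) (hchar : p \in [pchar F])
  (halg : algebraic_over_prime_field F)
  (s : nat) (L : zmodType) (v : 'I_s -> L) (coord : L -> 'I_s -> int)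
  (hspan : forall x : L, x = \sum_(i < s) v i *~ coord x i)
  (hindep : forall alpha : 'I_s -> int,
      \sum_(i < s) v i *~ alpha i = 0 -> forall i, alpha i = 0)
  (t : nat) (a : 'I_t -> fsF F L) :
  (* the map Char(Lambda) -> (Kbar^x)^s is a bijection ... *)
  ((forall chi1 chi2 : L -> F, is_char chi1 -> is_char chi2 ->
       (forall i, chi1 (v i) = chi2 (v i)) -> forall x, chi1 x = chi2 x) /\
   (forall xi : {ffun 'I_s -> F}, (forall i, xi i != 0) ->
       exists2 chi : L -> F, is_char chi & forall i, chi (v i) = xi i) /\
   (* ... restricting to a bijection from harmonic characters onto Sigma *)
   (forall chi : L -> F, is_char chi ->
       (harmonic a chi <-> Sigma coord a [ffun i => chi (v i)]))) /\
  forall (n : 'I_s -> nat), (forall i, (0 < n i)%N /\ coprime (n i) p) ->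
  (* G = Lambda / Lambda_n, presented by a surjective hom pi with kernel Lambda_n *)
  forall (G : finZmodType) (pi : L -> G),
    (forall x y, pi (x + y) = pi x + pi y) ->
    (forall c : G, exists x, pi x = c) ->
    (forall x, pi x = 0 <-> in_Lambda_n v n x) ->
  let astar := fun j => push pi (a j) in
  bijection_between (fun xi : {ffun 'I_s -> F} => Sigma coord a xi /\ mu n xi)
                    (fun chi : {ffun G -> F} => is_charG chi /\ harmonicG astar chi) /\
  bijection_between (fun chi : {ffun G -> F} => is_charG chi /\ harmonicG astar chi)
                    (Vset astar) /\
  exists N : nat,
    dim_is (fun f : L -> F => periodic (in_Lambda_n v n) f /\ harmonic a f) N /\
    card_is (Vset astar) N /\
    card_is (fun xi : {ffun 'I_s -> F} => Sigma coord a xi /\ mu n xi) N.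
Proof.
split.
  split.
    move=> chi1 chi2 h1 h2 e x.
    rewrite (chi_ch hspan h1) (chi_ch hspan h2); congr (ch coord _ x).
    by apply/ffunP => i; rewrite !ffunE e.
  split.
    move=> xi hxi; exists (ch coord xi); first exact: (ch_is_char hspan hindep).
    by move=> i; rewrite (ch_v hspan hindep).
  by move=> chi hc; apply: (harm_sigma hspan hindep).
move=> n hn G pi hadd hsurj hker astar.
have B1 := bij1 hspan hindep hadd hsurj hker a.
have B2 := bij2 astar.
split; first exact: B1.
split; first exact: B2.
have hn1 i : (0 < n i)%N := (hn i).1.
have hnF i : (n i)%:R != 0 :> F.
  rewrite -(dvdn_pcharf hchar); have := (hn i).2.
  by rewrite coprime_sym prime_coprime.
pose w i := sval (prim_exists (hn1 i) (hnF i)).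
have hw i : (n i).-primitive_root (w i) by rewrite /w; case: prim_exists.
have CS : card_is (fun xi : {ffun 'I_s -> F} => Sigma coord a xi /\ mu n xi)
   (size (lS coord n w a)).
  exists (lS coord n w a); split; first exact: uniq_lS.
  split => // xi; split.
    move=> /lS_M [hM hsig]; have hmu := (mem_M hn1 hw xi).1 hM.
    split => //; split; first by move=> i; exact: (hmu i).1.
    by move=> j; move: hsig => /forallP /(_ j) /eqP.
  move=> [[_ hs] hmu]; rewrite mem_filter; apply/andP; split.
    by apply/forallP => j; apply/eqP.
  exact/(mem_M hn1 hw xi).2.
exists (size (lS coord n w a)); split.
  exact: (dim_main hspan hindep hn1 hw).
split => //.
exact: (card_bij (card_bij CS B1) B2).
Qed.
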